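(* Let $a\in\mathbb R$ and define $\Gamma_p$ and $A_{p,q}$ as in the context. Then, as meromorphic functions of $s$: (i) for all $m,n\in\mathbb Z$, $A_{m,n}(s)=A_{m,0}(s)+A_{0,n}(s)$; (ii) for all $m\in\mathbb Z$, $A_{m,0}(s)=A_{0,-m}(s+m)$; (iii) for all $\ell,m,n\in\mathbb Z$, $$\begin{aligned}&A_{m+\ell,n+\ell}(s)A_{\ell,0}(s)-A_{m,n}(s)A_{m+n,0}(s)+A_{n+m,\ell+m}(s)A_{m,0}(s)-A_{n,\ell}(s)A_{n+\ell,0}(s)\\&+A_{\ell+n,m+n}(s)A_{n,0}(s)-A_{\ell,m}(s)A_{\ell+m,0}(s)\\&+\Gamma_0(s)\big(A_{m,n}(s)-A_{m+\ell,n+\ell}(s)+A_{n,\ell}(s)-A_{n+m,\ell+m}(s)+A_{\ell,m}(s)-A_{\ell+n,m+n}(s)\big)=0.\end{aligned}$$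
   Context: Fix $a\in\mathbb R$. For $p\in\mathbb Z$ define the meromorphic functions of $s\in\mathbb C$ $$\Gamma_p(s)=\frac{\Gamma(a(s+p)+1)}{\Gamma(a(s+p-1)+1)},\qquad A_{p,q}(s)=\Gamma_p(s)-\Gamma_q(s),$$ where $\Gamma$ is Euler's gamma function. *)

(* Defs.v *)
From Stdlib Require Import Reals.
From Coquelicot Require Import Coquelicot.
Open Scope R_scope.

Definition cpow_nat (n : nat) (z : C) : C :=
  Cmult (RtoC (exp (Re z * ln (INR n))))
        (cos (Im z * ln (INR n)), sin (Im z * ln (INR n))).

Fixpoint rising (z : C) (n : nat) : C :=
  match n with
  | O => z
  | S k => Cmult (rising z k) (Cplus z (RtoC (INR (S k))))
  end.

Definition gauss_term (z : C) (n : nat) : C :=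
  Cdiv (Cmult (RtoC (INR (Factorial.fact n))) (cpow_nat n z)) (rising z n).

(* Euler's Gamma function on C, via Gauss's limit formula
   Gamma(z) = lim_{n -> oo} n! n^z / (z (z+1) ... (z+n)),
   valid for z not in {0,-1,-2,...}; at the poles the value is an
   unspecified complex number (total function). *)
Definition CGamma (z : C) : C :=
  lim (T := C_CompleteNormedModule) (filtermap (gauss_term z) eventually).

Definition Gam (a : R) (p : Z) (s : C) : C :=
  Cdiv (CGamma (Cplus (Cmult (RtoC a) (Cplus s (RtoC (IZR p)))) (RtoC 1)))
       (CGamma (Cplus (Cmult (RtoC a) (Cplus s (RtoC (IZR (p - 1))))) (RtoC 1))).

Definition Aq (a : R) (p q : Z) (s : C) : C := Cminus (Gam a p s) (Gam a q s).

(* Main.v *)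
Require Import Defs.
From Stdlib Require Import Reals ZArith.
From Coquelicot Require Import Coquelicot.

Theorem mainTheorem2 (a : R) :
  (forall (m n : Z) (s : C), Aq a m n s = Aq a m 0 s + Aq a 0 n s)%C /\
  (forall (m : Z) (s : C), Aq a m 0 s = Aq a 0 (- m) (s + RtoC (IZR m)))%C /\
  (forall (l m n : Z) (s : C),
     (Aq a (m + l) (n + l) s * Aq a l 0 s - Aq a m n s * Aq a (m + n) 0 s
      + Aq a (n + m) (l + m) s * Aq a m 0 s - Aq a n l s * Aq a (n + l) 0 s
      + Aq a (l + n) (m + n) s * Aq a n 0 s - Aq a l m s * Aq a (l + m) 0 s
      + Gam a 0 s * (Aq a m n s - Aq a (m + l) (n + l) s + Aq a n l s
                     - Aq a (n + m) (l + m) s + Aq a l m s - Aq a (l + n) (m + n) s)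
     = 0)%C).
Proof.
  split; [|split].
  - intros m n s. unfold Aq. ring.
  - intros m s. unfold Aq.
    assert (E1 : Gam a 0 (s + RtoC (IZR m)) = Gam a m s).
    { unfold Gam.
      replace (s + RtoC (IZR m) + RtoC (IZR 0))%C with (s + RtoC (IZR m))%C
        by (apply injective_projections; simpl; ring).
      replace (s + RtoC (IZR m) + RtoC (IZR (0 - 1)))%C with (s + RtoC (IZR (m - 1)))%C
        by (apply injective_projections; simpl; rewrite ?minus_IZR; simpl; ring).
      reflexivity. }
    assert (E2 : Gam a (- m) (s + RtoC (IZR m)) = Gam a 0 s).
    { unfold Gam.
      replace (s + RtoC (IZR m) + RtoC (IZR (- m)))%C with (s + RtoC (IZR 0))%C
        by (apply injective_projections; simpl; rewrite ?opp_IZR; simpl; ring).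
      replace (s + RtoC (IZR m) + RtoC (IZR (- m - 1)))%C with (s + RtoC (IZR (0 - 1)))%C
        by (apply injective_projections; simpl; rewrite ?minus_IZR, ?opp_IZR; simpl; ring).
      reflexivity. }
    rewrite E1, E2. reflexivity.
  - intros l m n s. unfold Aq.
    rewrite (Z.add_comm n m), (Z.add_comm l m), (Z.add_comm l n).
    ring.
Qed.
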